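(* Let $0<q<1$, $x\in\mathbb{C}$ and integers $m\ge n\ge 0$. Then $$\mathcal{P}_n^{(1/4,1/4)}\big(x;q^{m-n}\,\big|\,q\big)=\frac{(q;q)_n}{(q^{m-n+1};q)_n}\,L_n^{(m-n)}\big(x\,q^{-(m+n+1)/2};q\big),$$ where $L_n^{(\rho)}(y;q)$ is the $q$-Laguerre polynomial.
   Context: $(a;q)_0=1$, $(a;q)_k=\prod_{j=0}^{k-1}(1-aq^j)$. For a nonnegative integer $\gamma$ and real $\mu,\nu$, $\mathcal{P}_n^{(\mu,\nu)}(x;q^\gamma|q)=\sum_{k=0}^n\frac{q^{k^2(\mu+\nu)+2\nu\gamma k}(q^{-n};q)_k}{(q;q)_k(q^{\gamma+1};q)_k}x^k$. The $q$-Laguerre polynomials are $$L_n^{(\rho)}(y;q)=\frac{(q^{\rho+1};q)_n}{(q;q)_n}\,{}_1\phi_1\big(q^{-n};q^{\rho+1};q;-y\,q^{n+\rho+1}\big),\qquad {}_1\phi_1(a;b;q;w)=\sum_{k\ge0}\frac{(a;q)_k}{(q;q)_k(b;q)_k}(-1)^kq^{k(k-1)/2}w^k.$$ *)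

(* Defs.v *)
From HB Require Import structures.
From mathcomp Require Import all_boot all_order all_algebra.
From mathcomp Require Import complex.
From mathcomp Require Import all_classical all_reals all_analysis.
Set Implicit Arguments. Unset Strict Implicit. Unset Printing Implicit Defensive.
Import Order.TTheory GRing.Theory Num.Theory ComplexField.
Local Open Scope ring_scope.
Local Open Scope complex_scope.

Definition qpoch (R : pzRingType) (a q : R) (k : nat) : R :=
  \prod_(j < k) (1 - a * q ^+ j).

Definition Pcal (R : realType) (q mu nu : R) (gam n : nat) (x : R[i]) : R[i] :=
  \sum_(k < n.+1)
    ((q `^ ((k * k)%N%:R * (mu + nu) + 2 * nu * gam%:R * k%:R))
      * qpoch ((q ^+ n)^-1) q k / (qpoch q q k * qpoch (q ^+ gam.+1) q k))%:C
     * x ^+ k.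

(* When a = q^{-n}, all terms with k > n vanish, so the N = n+1 partial
   sum is the whole (terminating) series. *)
Definition phi11_partial (R : realType) (N : nat) (a b q : R) (w : R[i]) : R[i] :=
  \sum_(k < N)
    ((qpoch a q k / (qpoch q q k * qpoch b q k)) * (-1) ^+ k
      * q ^+ ((k * (k - 1))./2))%:C * w ^+ k.

Definition qLaguerre (R : realType) (n rho : nat) (y : R[i]) (q : R) : R[i] :=
  (qpoch (q ^+ rho.+1) q n / qpoch q q n)%:C
  * phi11_partial n.+1 ((q ^+ n)^-1) (q ^+ rho.+1) q (- y * (q ^+ (n + rho).+1)%:C).

(* Main.v *)
Require Import Defs.
Set Warnings "-all".
From HB Require Import structures.
From mathcomp Require Import all_boot all_order all_algebra.
From mathcomp Require Import complex.
From mathcomp Require Import all_classical all_reals all_analysis.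
From mathcomp Require Import ring lra.
Import Order.TTheory GRing.Theory Num.Theory ComplexField.
Local Open Scope ring_scope.
Local Open Scope complex_scope.

Lemma qpoch_gt0 (R : realType) (q : R) r n : 0 < q -> q < 1 ->
  0 < qpoch (q ^+ r.+1) q n.
Proof.
move=> q0 q1; rewrite /qpoch; apply: prodr_gt0 => j _.
rewrite -exprD subr_gt0 exprn_ilt1 ?ltW //.
Qed.

Lemma half_real (R : numDomainType) k :
  (((k * (k - 1))./2)%N%:R : R) * 2 = k%:R * (k%:R - 1).
Proof.
case: k => [|k]; first by rewrite mul0n /= !mulr0n !mul0r.
rewrite -natrM muln2 even_halfK.
  by rewrite natrM subn1 /= -addn1 natrD addrK.
by rewrite oddM subn1 /=; case: (odd k).
Qed.

Theorem mainTheorem3 (R : realType) (q : R) (x : R[i]) (m n : nat) :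
  0 < q -> q < 1 -> (n <= m)%N ->
  Pcal q (1 / 4) (1 / 4) (m - n) n x =
  (qpoch q q n / qpoch (q ^+ (m - n).+1) q n)%:C
  * qLaguerre n (m - n) (x * (q `^ (- ((m + n).+1)%:R / 2))%:C) q.
Proof.
move=> q0 q1 nm.
rewrite /qLaguerre /Pcal /phi11_partial.
have qn0 : q != 0 by rewrite gt_eqF.
have hg : (n + (m - n)).+1 = m.+1 by rewrite subnKC.
rewrite hg.
set g := (m - n)%N.
have P1 := @qpoch_gt0 R q 0 n q0 q1; rewrite expr1 in P1.
have P2 := @qpoch_gt0 R q g n q0 q1.
rewrite mulrA -rmorphM.
have E1 : qpoch q q n / qpoch (q ^+ g.+1) q n * (qpoch (q ^+ g.+1) q n / qpoch q q n) = 1.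
  by rewrite mulrA divfK ?gt_eqF // divff ?gt_eqF.
rewrite E1.
rewrite rmorph1 [RHS]mul1r.
apply: eq_bigr => k _.
set c := q `^ (- ((m + n).+1)%:R / 2).
set d := q ^+ m.+1.
have -> : (- (x * c%:C) * d%:C) ^+ k = ((-1) ^+ k * c ^+ k * d ^+ k)%:C * x ^+ k.
  have -> : - (x * c%:C) * d%:C = (-1 * c * d)%:C * x.
    rewrite !rmorphM rmorphN rmorph1 mulN1r !mulNr; congr (- _).
    by rewrite [x * _]mulrC mulrAC.
  by rewrite exprMn -rmorphXn !exprMn.
rewrite mulrA -rmorphM; congr (_%:C * _).
have HE : q `^ ((k * k)%N%:R * (1 / 4 + 1 / 4) + 2 * (1 / 4) * g%:R * k%:R)
   = q ^+ (k * (k - 1))./2 * c ^+ k * d ^+ k.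
  have c0 : 0 <= c by apply: powR_ge0.
  rewrite /c /d -exprM -(powR_mulrn k (powR_ge0 q (- ((m + n).+1)%:R / 2))) -powRrM -!(powR_mulrn _ (ltW q0)).
  rewrite -!powRD ?qn0 ?implybT //; congr (q `^ _).
  have hh := half_real R k.
  have -> : ((k * (k - 1))./2)%N%:R = (k%:R * (k%:R - 1)) / 2 :> R.
    by rewrite -hh mulfK.
  rewrite /g natrB // !natrM.
  rewrite -[(m + n).+1]addn1 -[m.+1]addn1 !natrD; field; rewrite ?pnatr_eq0 //.
rewrite HE.
set s := (-1) ^+ k.
have ss : s * s = 1 by rewrite /s -exprMn mulN1r opprK expr1n.
set h := q ^+ _.
set A := qpoch _ _ _; set B := qpoch _ _ _; set C := qpoch _ _ _.
clearbody s h A B C; move: (c ^+ k) (d ^+ k) => ck dk.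
transitivity (s * s * (h * ck * dk * A / (B * C))); first by rewrite ss mul1r.
ring.
Qed.
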